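(* Let $0<q<1$, let $n$ be a positive integer and let $s>1$ be real. Then \[ n\,\zeta[\{s\}^n] = \sum_{k=1}^n (-1)^{k+1}\,\zeta[\{s\}^{n-k}] \sum_{j=0}^{k-1}\binom{k-1}{j}(1-q)^j\,\zeta[ks-j]. \]
   Context: Fix a real number $q$ with $0<q<1$. For real $x$ put $[x]_q := (1-q^x)/(1-q)$ (so $[n]_q=1+q+\cdots+q^{n-1}$ for integers $n\ge 0$). For an integer $m\ge1$ and real numbers $s_1,\dots,s_m$ with $s_1>1$ and $s_j\ge 1$ for $2\le j\le m$, the multiple $q$-zeta function is $\zeta[s_1,\dots,s_m] := \sum_{k_1>k_2>\cdots>k_m>0}\prod_{j=1}^m \frac{q^{(s_j-1)k_j}}{[k_j]_q^{s_j}}$, the sum being over positive integers; for the empty argument list, $\zeta[\,]:=1$. The notation $\{s\}^n$ in an argument list denotes $n$ consecutive copies of $s$ (empty if $n=0$). *)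

(* Defs.v *)
From Stdlib Require Import Reals List.
From Coquelicot Require Import Coquelicot.
Open Scope R_scope.

Definition qnum (q x : R) : R := (1 - Rpower q x) / (1 - q).

Definition qterm (q s : R) (k : nat) : R :=
  Rpower q ((s - 1) * INR k) / Rpower (qnum q (INR k)) s.

(* Truncated multiple q-zeta sum:
   qzetaN q [s1;...;sm] N = sum over N >= k1 > k2 > ... > km > 0
   of prod_j qterm q sj kj; the empty list gives 1. *)
Fixpoint qzetaN (q : R) (l : list R) (N : nat) : R :=
  match l with
  | nil => 1
  | s :: l' => sum_n_m (fun k => qterm q s k * qzetaN q l' (k - 1)%nat) 1 N
  end.

Definition qzeta (q : R) (l : list R) : R := real (Lim_seq (qzetaN q l)).

(* Main.v *)
Require Import Defs.
From Stdlib Require Import Reals List Lia Lra.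
From Coquelicot Require Import Coquelicot.
Open Scope R_scope.

Fixpoint ee (a : nat -> R) (N j : nat) : R :=
  match N with
  | O => match j with O => 1 | S _ => 0 end
  | S N' => match j with O => 1 | S j' => ee a N' j + a N * ee a N' j' end
  end.

Definition em (a : nat -> R) (N j : nat) : R :=
  match j with O => 0 | S j' => ee a N j' end.

Lemma ee_S a N j : ee a (S N) j = ee a N j + a (S N) * em a N j.
Proof. destruct j; simpl; [destruct N; simpl; ring| ring]. Qed.

Definition PP (a : nat -> R) (N k : nat) : R := sum_n_m (fun m => a m ^ k) 1 N.

Lemma PP_0 a k : PP a 0 k = 0.
Proof. unfold PP. rewrite sum_n_m_zero; [reflexivity|lia]. Qed.

Lemma PP_S a N k : PP a (S N) k = PP a N k + a (S N) ^ k.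
Proof. unfold PP. rewrite sum_n_Sm; [reflexivity|lia]. Qed.

Lemma sumR_scal (c : R) (f : nat -> R) m :
  sum_n (fun i => c * f i) m = c * sum_n f m.
Proof.
  induction m.
  - rewrite !sum_O. reflexivity.
  - rewrite !sum_Sn, IHm. unfold plus; simpl. ring.
Qed.

Lemma sumR_add (f g : nat -> R) m :
  sum_n (fun i => f i + g i) m = sum_n f m + sum_n g m.
Proof.
  induction m.
  - rewrite !sum_O. reflexivity.
  - rewrite !sum_Sn, IHm. unfold plus; simpl. ring.
Qed.

Lemma sum_n_peel (f : nat -> R) m :
  sum_n f (S m) = f O + sum_n (fun i => f (S i)) m.
Proof.
  induction m.
  - rewrite sum_Sn, !sum_O. reflexivity.
  - rewrite sum_Sn, IHm, sum_Sn. unfold plus; simpl. ring.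
Qed.

Lemma tele a N x m :
  sum_n (fun i => (-1)^i * x^(S i) * (ee a N (m - i) + x * em a N (m - i))) m
  = x * ee a N m.
Proof.
  induction m.
  - rewrite sum_O. simpl. ring.
  - rewrite sum_n_peel.
    rewrite (@sum_n_ext R_AbelianMonoid _ (fun i => (-x) *
      ((-1)^i * x^(S i) * (ee a N (m - i) + x * em a N (m - i))))).
    2:{ intro i. simpl (S m - S i)%nat. simpl. ring. }
    rewrite sumR_scal, IHm. simpl. ring.
Qed.

Lemma newton0 a N : forall m,
  sum_n (fun i => (-1)^i * ee a N (m - i) * PP a N (S i)) m = INR (S m) * ee a N (S m).
Proof.
  induction N; intro m.
  - rewrite (@sum_n_ext R_AbelianMonoid _ (fun i => 0 * 0)).
    2:{ intro i. rewrite PP_0. simpl. ring. }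
    rewrite sumR_scal. simpl ee. rewrite Rmult_0_l, Rmult_0_r. reflexivity.
  - rewrite (@sum_n_ext R_AbelianMonoid _ (fun i => (
        ((-1)^i * ee a N (m - i) * PP a N (S i)) +
        (a (S N)) * ((-1)^i * em a N (m - i) * PP a N (S i))) +
        ((-1)^i * (a (S N))^(S i) * (ee a N (m - i) + a (S N) * em a N (m - i))))).
    2:{ intro i. rewrite ee_S, PP_S. simpl. ring. }
    rewrite !sumR_add, sumR_scal, IHN, tele.
    assert (HB : sum_n (fun i => (-1)^i * em a N (m - i) * PP a N (S i)) m = INR m * ee a N m).
    { destruct m.
      - rewrite sum_O. simpl. ring.
      - rewrite sum_Sn. rewrite Nat.sub_diag. simpl (em a N 0).
        rewrite (@sum_n_ext_loc R_AbelianMonoid _ (fun i => (-1)^i * ee a N (m - i) * PP a N (S i))).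
        + rewrite IHN. unfold plus; simpl. ring.
        + intros i Hi. replace (S m - i)%nat with (S (m - i)) by lia. reflexivity. }
    rewrite HB. rewrite (ee_S a N (S m)). simpl (em a N (S m)).
    change (INR (S m) * ee a N (S m) + a (S N) * (INR m * ee a N m) + a (S N) * ee a N m = INR (S m) * (ee a N (S m) + a (S N) * ee a N m)). rewrite S_INR. ring.
Qed.

Lemma Rpower_pos' x y : 0 < Rpower x y.
Proof. unfold Rpower. apply exp_pos. Qed.

Lemma qterm_pos q t m : 0 < qterm q t m.
Proof. unfold qterm. apply Rdiv_lt_0_compat; apply Rpower_pos'. Qed.

Lemma qpow_le q m : 0 < q -> q < 1 -> (1 <= m)%nat -> 0 < q ^ m <= q.
Proof.
  intros. destruct m as [|m]; [lia|]. simpl. split.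
  - apply Rmult_lt_0_compat; [lra| apply pow_lt; lra].
  - assert (q ^ m <= 1). { destruct m. simpl; lra. 
      destruct (pow_lt_1_compat q (S m)); [lra|lia|lra]. }
    assert (0 < q ^ m) by (apply pow_lt; lra). nra.
Qed.

Lemma qnum_ge1 q m : 0 < q -> q < 1 -> (1 <= m)%nat -> 1 <= qnum q (INR m).
Proof.
  intros. unfold qnum. rewrite Rpower_pow by lra.
  destruct (qpow_le q m) as [H3 H4]; auto.
  replace ((1 - q ^ m) / (1 - q)) with (1 + (q - q ^ m) / (1 - q)) by (field; lra).
  assert (0 <= (q - q ^ m) / (1 - q)) by (apply Rdiv_le_0_compat; lra). lra.
Qed.

Lemma r_lt1 q t : 0 < q -> q < 1 -> 1 < t -> Rpower q (t - 1) < 1.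
Proof.
  intros. unfold Rpower.
  assert (ln q < 0). { rewrite <- ln_1. apply ln_increasing; lra. }
  assert ((t - 1) * ln q < 0) by nra.
  pose proof (exp_increasing _ _ H3). rewrite exp_0 in H4. exact H4.
Qed.

Lemma qterm_le q t m : 0 < q -> q < 1 -> 1 < t -> (1 <= m)%nat ->
  qterm q t m <= (Rpower q (t - 1)) ^ m.
Proof.
  intros. unfold qterm. rewrite <- Rpower_pow by apply Rpower_pos'.
  rewrite Rpower_mult.
  assert (1 <= Rpower (qnum q (INR m)) t).
  { rewrite <- (Rpower_O (qnum q (INR m))) at 1.
    - apply Rle_Rpower; [apply qnum_ge1; auto| lra].
    - pose proof (qnum_ge1 q m H H0 H2); lra. }
  pose proof (Rpower_pos' q ((t - 1) * INR m)).
  unfold Rdiv. rewrite <- (Rmult_1_r (Rpower q ((t - 1) * INR m))) at 2.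
  apply Rmult_le_compat_l; [lra|].
  rewrite <- Rinv_1. apply Rinv_le_contravar; lra.
Qed.

Lemma sum1_le (f g : nat -> R) N : (forall k, (1 <= k)%nat -> f k <= g k) ->
  sum_n_m f 1 N <= sum_n_m g 1 N.
Proof.
  intro H. induction N.
  - rewrite !sum_n_m_zero by lia. apply Rle_refl.
  - rewrite !sum_n_Sm by lia. unfold plus; simpl. apply Rplus_le_compat; auto. apply H; lia.
Qed.

Lemma sum1_mono (f : nat -> R) N : 0 <= f (S N) ->
  sum_n_m f 1 N <= sum_n_m f 1 (S N).
Proof.
  intro H. rewrite (sum_n_Sm f 1 N) by lia. unfold plus; simpl. lra.
Qed.

Lemma geom_eq r N : (1 - r) * sum_n_m (fun m => r ^ m) 1 N = r - r ^ (S N).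
Proof.
  induction N.
  - rewrite sum_n_m_zero by lia. simpl. unfold zero; simpl. ring.
  - rewrite sum_n_Sm by lia. unfold plus; simpl. simpl in IHN.
    rewrite Rmult_plus_distr_l, IHN. ring.
Qed.

Lemma geom_bound r N : 0 <= r < 1 -> sum_n_m (fun m => r ^ m) 1 N <= 1 / (1 - r).
Proof.
  intro H. pose proof (geom_eq r N).
  assert (0 <= r ^ S N) by (apply pow_le; lra).
  apply Rmult_le_reg_l with (1 - r); [lra|]. rewrite H0.
  unfold Rdiv. rewrite Rmult_1_l, Rinv_r by lra. lra.
Qed.

Lemma qterm_sum_bound q t N : 0 < q -> q < 1 -> 1 < t ->
  sum_n_m (qterm q t) 1 N <= 1 / (1 - Rpower q (t - 1)).
Proof.
  intros. eapply Rle_trans.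
  - apply (sum1_le _ (fun m => Rpower q (t - 1) ^ m)). intros; apply qterm_le; auto.
  - apply geom_bound. pose proof (Rpower_pos' q (t-1)). pose proof (r_lt1 q t). lra.
Qed.

Lemma ex_Z q t : 0 < q -> q < 1 -> 1 < t -> ex_finite_lim_seq (qzetaN q (t :: nil)).
Proof.
  intros. apply ex_finite_lim_seq_incr with (1 / (1 - Rpower q (t - 1))).
  - intro n. simpl. apply sum1_mono. rewrite Rmult_1_r. left; apply qterm_pos.
  - intro n. simpl. rewrite (sum_n_m_ext _ (qterm q t)).
    + apply qterm_sum_bound; auto.
    + intro k. apply Rmult_1_r.
Qed.

Lemma qzetaN_ee q s : forall N j, qzetaN q (repeat s j) N = ee (qterm q s) N j.
Proof.
  induction N; intro j.
  - destruct j; simpl; [reflexivity|]. rewrite sum_n_m_zero by lia. reflexivity.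
  - destruct j; [reflexivity|].
    change (qzetaN q (repeat s (S j)) (S N)) with
      (sum_n_m (fun k => qterm q s k * qzetaN q (repeat s j) (k - 1)) 1 (S N)).
    rewrite sum_n_Sm by lia.
    change (sum_n_m (fun k => qterm q s k * qzetaN q (repeat s j) (k - 1)) 1 N)
      with (qzetaN q (repeat s (S j)) N).
    rewrite IHN. simpl (S N - 1)%nat. rewrite Nat.sub_0_r, IHN. unfold plus; simpl. reflexivity.
Qed.

Lemma ee_nonneg a N j : (forall k, 0 <= a k) -> 0 <= ee a N j.
Proof.
  intro Ha. revert j. induction N; intro j.
  - destruct j; simpl; lra.
  - destruct j; simpl; [lra|]. specialize (IHN (S j)) as H1. pose proof (IHN j).
    pose proof (Ha (S N)). nra.
Qed.

Lemma ee_mono a N j : (forall k, 0 <= a k) -> ee a N j <= ee a (S N) j.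
Proof.
  intro Ha. rewrite ee_S. assert (0 <= em a N j).
  { destruct j; simpl; [lra| apply ee_nonneg; auto]. }
  pose proof (Ha (S N)). nra.
Qed.

Lemma ee_bound a N : (forall k, 0 <= a k) -> forall j, ee a N j <= (sum_n_m a 1 N) ^ j.
Proof.
  intro Ha. induction N; intro j.
  - rewrite sum_n_m_zero by lia. destruct j; simpl; unfold zero; simpl; lra.
  - rewrite sum_n_Sm by lia. unfold plus; simpl.
    set (S0 := sum_n_m a 1 N).
    assert (HS : 0 <= S0).
    { unfold S0. clear IHN. induction N.
      + rewrite sum_n_m_zero by lia. unfold zero; simpl; lra.
      + rewrite sum_n_Sm by lia. unfold plus; simpl. pose proof (Ha (S N)). lra. }
    destruct j; simpl; [lra|].
    pose proof (IHN (S j)) as H1. pose proof (IHN j) as H2. simpl in H1.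
    fold S0 in H1, H2.
    pose proof (Ha (S N)).
    assert (S0 ^ j <= (S0 + a (S N)) ^ j) by (apply pow_incr; lra).
    assert (0 <= S0 ^ j) by (apply pow_le; lra).
    nra.
Qed.

Lemma ex_E q s j : 0 < q -> q < 1 -> 1 < s -> ex_finite_lim_seq (qzetaN q (repeat s j)).
Proof.
  intros. set (M := 1 / (1 - Rpower q (s - 1))).
  assert (Ha : forall k, 0 <= qterm q s k) by (intro; left; apply qterm_pos).
  apply ex_finite_lim_seq_incr with (M ^ j).
  - intro n. rewrite !qzetaN_ee. apply ee_mono; auto.
  - intro n. rewrite qzetaN_ee. eapply Rle_trans; [apply ee_bound; auto|].
    apply pow_incr. split.
    + clear -Ha. induction n.
      * rewrite sum_n_m_zero by lia. unfold zero; simpl; lra.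
      * rewrite sum_n_Sm by lia. unfold plus; simpl. pose proof (Ha (S n)). lra.
    + apply qterm_sum_bound; auto.
Qed.

Lemma pow_id q s K m : 0 < q -> q < 1 -> (1 <= m)%nat ->
  (qterm q s m) ^ (S K) =
  sum_n (fun j => Binomial.C K j * (1 - q) ^ j * qterm q (INR (S K) * s - INR j) m) K.
Proof.
  intros Hq0 Hq1 Hm.
  set (x := q ^ m). set (Q := qnum q (INR m)).
  set (A := Rpower q ((s - 1) * INR m)). set (B := Rpower Q s).
  assert (HQ1 : 1 <= Q) by (apply qnum_ge1; auto).
  assert (HQx : (1 - q) * Q + x = 1).
  { unfold Q, x, qnum. rewrite Rpower_pow by lra. field. lra. }
  assert (HA : 0 < A) by apply Rpower_pos'.
  assert (HB : 0 < B) by apply Rpower_pos'.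
  assert (Hterm : forall j, (j <= K)%nat ->
     qterm q (INR (S K) * s - INR j) m = (A / B) ^ (S K) * Q ^ j * x ^ (K - j)).
  { intros j Hj. unfold qterm. fold Q.
    replace ((INR (S K) * s - INR j - 1) * INR m) with
      (((s - 1) * INR m) * INR (S K) + INR (m * (K - j))).
    2:{ rewrite mult_INR, minus_INR by exact Hj. rewrite S_INR. ring. }
    replace (INR (S K) * s - INR j) with (s * INR (S K) + - INR j) by ring.
    rewrite !Rpower_plus, <- (Rpower_mult q ((s - 1) * INR m) (INR (S K))),
      <- (Rpower_mult Q s (INR (S K))), Rpower_Ropp.
    fold A B.
    rewrite (Rpower_pow j Q) by lra.
    rewrite (Rpower_pow _ q) by lra.
    rewrite (Rpower_pow (S K) A) by lra.
    rewrite (Rpower_pow (S K) B) by lra.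
    rewrite pow_mult. fold x.
    unfold Rdiv. rewrite Rpow_mult_distr, pow_inv.
    assert (B ^ S K <> 0) by (apply pow_nonzero; lra).
    assert (Q ^ j <> 0) by (apply pow_nonzero; lra).
    field. split; auto. }
  rewrite (@sum_n_ext_loc R_AbelianMonoid _
     (fun j => (A / B) ^ (S K) * (Binomial.C K j * ((1 - q) * Q) ^ j * x ^ (K - j)))).
  2:{ intros j Hj. rewrite Hterm by exact Hj. rewrite Rpow_mult_distr. simpl. ring. }
  rewrite sumR_scal, sum_n_Reals, <- binomial, HQx, pow1, Rmult_1_r.
  reflexivity.
Qed.

Lemma swap (f : nat -> nat -> R) K N :
  sum_n_m (fun m => sum_n (fun j => f j m) K) 1 N = sum_n (fun j => sum_n_m (fun m => f j m) 1 N) K.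
Proof.
  induction K.
  - rewrite sum_O. apply sum_n_m_ext. intro m. rewrite sum_O. reflexivity.
  - rewrite sum_Sn, <- IHK, <- sum_n_m_plus. apply sum_n_m_ext. intro m. rewrite sum_Sn. reflexivity.
Qed.

Lemma sum1_scal (c : R) (f : nat -> R) N :
  sum_n_m (fun m => c * f m) 1 N = c * sum_n_m f 1 N.
Proof.
  induction N.
  - rewrite !sum_n_m_zero by lia. unfold zero; simpl. ring.
  - rewrite !sum_n_Sm by lia. rewrite IHN. unfold plus; simpl. ring.
Qed.

Lemma PP_expand q s N K : 0 < q -> q < 1 ->
  PP (qterm q s) N (S K) =
  sum_n (fun j => Binomial.C K j * (1 - q) ^ j * qzetaN q ((INR (S K) * s - INR j) :: nil) N) K.
Proof.
  intros. unfold PP.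
  rewrite (sum_n_m_ext_loc _ (fun m => sum_n (fun j =>
     Binomial.C K j * (1 - q) ^ j * qterm q (INR (S K) * s - INR j) m) K)).
  2:{ intros k Hk. apply pow_id; auto; lia. }
  rewrite swap. apply sum_n_ext. intro j. rewrite sum1_scal. simpl.
  f_equal. apply sum_n_m_ext. intro k. rewrite Rmult_1_r. reflexivity.
Qed.

Lemma newton a N n : (1 <= n)%nat ->
  INR n * ee a N n = sum_n_m (fun k => (-1) ^ (k + 1) * ee a N (n - k) * PP a N k) 1 n.
Proof.
  intro Hn. destruct n as [|m]; [lia|].
  rewrite <- newton0. rewrite <- sum_n_m_S. unfold sum_n. apply sum_n_m_ext. intro i.
  replace (S i + 1)%nat with (i + 2)%nat by lia. rewrite pow_add. simpl. ring.
Qed.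

Lemma trunc q s n N : 0 < q -> q < 1 -> (1 <= n)%nat ->
  INR n * qzetaN q (repeat s n) N =
  sum_n_m (fun k =>
      (-1) ^ (k + 1) * qzetaN q (repeat s (n - k)) N *
      sum_n (fun j => Binomial.C (k - 1) j * (1 - q) ^ j
                      * qzetaN q (INR k * s - INR j :: nil) N) (k - 1)) 1 n.
Proof.
  intros. rewrite qzetaN_ee, newton by auto.
  apply sum_n_m_ext_loc. intros k Hk. destruct k as [|K]; [lia|].
  rewrite qzetaN_ee, PP_expand by auto. simpl (S K - 1)%nat. rewrite Nat.sub_0_r. reflexivity.
Qed.

Lemma lim_sum (u : nat -> nat -> R) (l : nat -> R) a b :
  (forall k, (a <= k <= b)%nat -> is_lim_seq (u k) (l k)) ->
  is_lim_seq (fun N => sum_n_m (fun k => u k N) a b) (sum_n_m l a b).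
Proof.
  revert a. induction b; intros a H.
  - destruct a.
    + rewrite sum_n_n. apply is_lim_seq_ext with (u 0%nat).
      * intro N. rewrite sum_n_n. reflexivity.
      * apply H. lia.
    + rewrite sum_n_m_zero by lia. apply is_lim_seq_ext with (fun _ => 0).
      * intro N. rewrite sum_n_m_zero by lia. reflexivity.
      * apply is_lim_seq_const.
  - destruct (Compare_dec.le_lt_dec a (S b)) as [Hab|Hab].
    + rewrite sum_n_Sm by exact Hab.
      apply is_lim_seq_ext with (fun N => sum_n_m (fun k => u k N) a b + u (S b) N).
      * intro N. rewrite sum_n_Sm by exact Hab. reflexivity.
      * apply is_lim_seq_plus'.
        -- apply IHb. intros; apply H; lia.
        -- apply H; lia.
    + rewrite sum_n_m_zero by lia. apply is_lim_seq_ext with (fun _ => 0).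
      * intro N. rewrite sum_n_m_zero by lia. reflexivity.
      * apply is_lim_seq_const.
Qed.

Lemma lim_of q l : ex_finite_lim_seq (qzetaN q l) -> is_lim_seq (qzetaN q l) (qzeta q l).
Proof.
  intros [x Hx]. unfold qzeta. rewrite (is_lim_seq_unique _ _ Hx). exact Hx.
Qed.

Theorem theorem2p1 (q : R) (n : nat) (s : R) :
  0 < q -> q < 1 -> (1 <= n)%nat -> 1 < s ->
  INR n * qzeta q (repeat s n) =
  sum_n_m (fun k =>
      (-1) ^ (k + 1) * qzeta q (repeat s (n - k)) *
      sum_n (fun j => Binomial.C (k - 1) j * (1 - q) ^ j
                      * qzeta q (INR k * s - INR j :: nil)) (k - 1))
    1 n.
Proof.
  intros Hq0 Hq1 Hn Hs.
  assert (H1 : is_lim_seq (fun N => INR n * qzetaN q (repeat s n) N) (INR n * qzeta q (repeat s n))).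
  { apply is_lim_seq_mult'; [apply is_lim_seq_const| apply lim_of, ex_E; auto]. }
  assert (H2 : is_lim_seq (fun N => INR n * qzetaN q (repeat s n) N)
    (sum_n_m (fun k =>
      (-1) ^ (k + 1) * qzeta q (repeat s (n - k)) *
      sum_n (fun j => Binomial.C (k - 1) j * (1 - q) ^ j
                      * qzeta q (INR k * s - INR j :: nil)) (k - 1)) 1 n)).
  { eapply is_lim_seq_ext. { intro N. symmetry. apply trunc; auto. }
    apply lim_sum. intros k Hk.
    apply is_lim_seq_mult'.
    - apply is_lim_seq_mult'; [apply is_lim_seq_const| apply lim_of, ex_E; auto].
    - unfold sum_n. apply lim_sum. intros j Hj.
      apply is_lim_seq_mult'; [apply is_lim_seq_const|].
      apply lim_of, ex_Z; auto.
      assert (1 <= INR k) by (apply (le_INR 1); lia).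
      assert (INR j <= INR k - 1).
      { replace (INR k - 1) with (INR (k - 1)) by (rewrite minus_INR by lia; reflexivity). apply le_INR. lia. }
      nra. }
  pose proof (is_lim_seq_unique _ _ H1) as E1.
  pose proof (is_lim_seq_unique _ _ H2) as E2.
  rewrite E1 in E2. injection E2. auto.
Qed.
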